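(* Let $n\ge1$, $K=U(n)$ acting on $\mathcal{O}_\Lambda$ via $k\mapsto\mathrm{diag}(1,k)$, $\underline{\mu}=(\mu_1\ge\dots\ge\mu_n)$, $\mathrm{M}=\mathrm{diag}(\mu_1,\dots,\mu_n)$, and let $p=\begin{pmatrix}c&\mathbf{z}^\dagger\\ \mathbf{z}&\mathrm{M}\end{pmatrix}\in\mathcal{O}_\Lambda$ (so $\Phi(p)=\mathrm{M}$). Let $X\in\mathfrak{u}(n)$ and $\mathbf{x}\in\mathbb{C}^n$ satisfy $0=\mathbf{x}\mathbf{z}^\dagger+\mathbf{z}\mathbf{x}^\dagger+[X,\mathrm{M}]$. If $\mu\in[\underline{\mu}]$ is such that the component of the interlacing pattern of $(\underline{\lambda},\underline{\mu})$ labelled $\mu$ is not an M-shape, then $$(X\mathbf{z})_\mu=\Big(\sum_{\tau\in[\underline{\mu}],\ \text{M-shape}}\frac{r_\tau^2}{\mu-\tau}\Big)\mathbf{x}_\mu.$$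
   Context: $\mathcal{O}_\Lambda\subset\mathcal{H}_{n+1}$ is the set of $(n+1)\times(n+1)$ Hermitian matrices with eigenvalues $\lambda_1\ge\dots\ge\lambda_{n+1}$ (a fixed non-increasing real sequence $\underline{\lambda}$); $K=U(n)$ acts by conjugation by $\mathrm{diag}(1,k)$ and $\Phi(p)$ is the bottom-right $n\times n$ submatrix of $p$. For $p\in\mathcal{O}_\Lambda$ with $\Phi(p)=\mathrm{M}$ the pair $(\underline{\lambda},\underline{\mu})$ satisfies $\lambda_1\ge\mu_1\ge\lambda_2\ge\dots\ge\mu_n\ge\lambda_{n+1}$. Notation: $[\underline{\tau}]$ is the set of distinct values of a sequence, $n_v(\underline{\tau})$ the number of occurrences of $v$. For $\mu\in[\underline{\mu}]$ and $\mathbf{v}\in\mathbb{C}^n$, $\mathbf{v}_\mu\in\mathbb{C}^{n_\mu(\underline{\mu})}$ is the block of coordinates $j$ with $\mu_j=\mu$. For each value $v$ occurring in $\underline{\lambda}$ or $\underline{\mu}$, the component of the interlacing pattern labelled $v$ is an M-shape if $n_v(\underline{\mu})=n_v(\underline{\lambda})+1$, a W-shape if $n_v(\underline{\lambda})=n_v(\underline{\mu})+1$, and a parallelogram-shape if $n_v(\underline{\lambda})=n_v(\underline{\mu})$ (these are the only possibilities). For $\tau\in[\underline{\mu}]$ with M-shape component, $r_\tau>0$ is defined by $r_\tau^2=-\prod_{\lambda\in[\underline{\lambda}],\,\text{W-shape}}(\tau-\lambda)\prod_{\sigma\in[\underline{\mu}],\,\text{M-shape},\,\sigma\neq\tau}\frac{1}{\tau-\sigma}$;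 otherwise $r_\tau=0$. *)

(* Defs.v *)
From HB Require Import structures.
From mathcomp Require Import all_boot all_order all_algebra.
From mathcomp Require Import complex.
Set Implicit Arguments. Unset Strict Implicit. Unset Printing Implicit Defensive.
Import Order.TTheory GRing.Theory Num.Theory.
Local Open Scope ring_scope.

Definition adjmx (R : rcfType) m n (A : 'M[R[i]]_(m, n)) : 'M[R[i]]_(n, m) :=
  (map_mx (@conjc R) A)^T.

Definition nonincr (R : rcfType) k (s : 'I_k -> R) : Prop :=
  forall i j : 'I_k, (i <= j)%N -> s j <= s i.

Definition nocc (R : rcfType) k (s : 'I_k -> R) (v : R) : nat :=
  #|[pred i | s i == v]|.

Definition vals (R : rcfType) k (s : 'I_k -> R) : seq R :=
  undup [seq s i | i <- enum 'I_k].

(* shape of the component labelled v of the interlacing pattern (lam, mu) *)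
Definition Mshape (R : rcfType) n (lam : 'I_n.+1 -> R) (mu : 'I_n -> R) (v : R) : bool :=
  nocc mu v == (nocc lam v).+1.
Definition Wshape (R : rcfType) n (lam : 'I_n.+1 -> R) (mu : 'I_n -> R) (v : R) : bool :=
  nocc lam v == (nocc mu v).+1.

Definition rsq (R : rcfType) n (lam : 'I_n.+1 -> R) (mu : 'I_n -> R) (tau : R) : R :=
  - (\prod_(l <- vals lam | Wshape lam mu l) (tau - l))
    * \prod_(s <- vals mu | Mshape lam mu s && (s != tau)) (tau - s)^-1.

(* Main.v *)
Require Import Defs.
From HB Require Import structures.
From mathcomp Require Import all_boot all_order all_algebra.
From mathcomp Require Import complex.
From mathcomp Require Import ring lra zify.
Import Order.TTheory GRing.Theory Num.Theory.
Set Implicit Arguments. Unset Strict Implicit.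
Local Open Scope ring_scope.


Section Core.
Variable R : rcfType.
Variable n : nat.
Variables (mu w : 'I_n -> R) (c : R).
Local Notation q l := ('X - (mu l)%:P).
Definition GP (P : pred 'I_n) := \prod_(l | P l) q l.
Definition GPk (P : pred 'I_n) k := \prod_(l | P l && (l != k)) q l.
Definition FP (P : pred 'I_n) := ('X - c%:P) * GP P - \sum_(k | P k) (w k)%:P * GPk P k.

Lemma GP_split (P : pred 'I_n) k : P k -> GP P = q k * GPk P k.
Proof. by move=> Pk; rewrite /GP (bigD1 k). Qed.

Definition KP (P : pred 'I_n) r := GP P + \sum_(k | P k) (w k / (r - mu k))%:P * GPk P k.
Definition sP (P : pred 'I_n) r := r - c - \sum_(k | P k) w k / (r - mu k).

Lemma FP_decomp (P : pred 'I_n) r : (forall k, P k -> mu k != r) ->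
  FP P = ('X - r%:P) * KP P r + (sP P r)%:P * GP P.
Proof.
move=> Hne; rewrite /FP /KP /sP.
set a := fun k => w k / (r - mu k).
have H1 : (\sum_(k | P k) a k)%:P * GP P = \sum_(k | P k) (a k)%:P * q k * GPk P k.
  by rewrite rmorph_sum mulr_suml; apply eq_bigr => k Pk; rewrite (@GP_split P _ Pk) mulrA.
have H2 : \sum_(k | P k) (w k)%:P * GPk P k =
   \sum_(k | P k) ((a k)%:P * q k * GPk P k - ('X - r%:P) * ((a k)%:P * GPk P k)).
  apply eq_bigr => k Pk.
  have ew : (w k)%:P = (a k)%:P * (q k - ('X - r%:P)).
    have -> : q k - ('X - r%:P) = (r - mu k)%:P by rewrite polyCB; ring.
    rewrite -polyCM /a divfK //; rewrite subr_eq0 eq_sym; exact: Hne.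
  rewrite ew; ring.
rewrite H2 sumrB -H1 -mulr_sumr !polyCB.
ring.
Qed.

Lemma GP_eval (P : pred 'I_n) r : (GP P).[r] = \prod_(l | P l) (r - mu l).
Proof. by rewrite /GP horner_prod; apply eq_bigr => l _; rewrite hornerXsubC. Qed.

Lemma GPk_eval (P : pred 'I_n) k r : (GPk P k).[r] = \prod_(l | P l && (l != k)) (r - mu l).
Proof. by rewrite /GPk horner_prod; apply eq_bigr => l _; rewrite hornerXsubC. Qed.

Lemma GP_eval_neq0 (P : pred 'I_n) r : (forall k, P k -> mu k != r) -> (GP P).[r] != 0.
Proof.
move=> Hne; rewrite GP_eval; apply/prodf_neq0 => l Pl.
by rewrite subr_eq0 eq_sym Hne.
Qed.

Hypothesis w_ge0 : forall k, 0 <= w k.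

Lemma KP_eval_neq0 (P : pred 'I_n) r : (forall k, P k -> mu k != r) -> (KP P r).[r] != 0.
Proof.
move=> Hne.
have ->: (KP P r).[r] = (GP P).[r] * (1 + \sum_(k | P k) w k / (r - mu k) ^+ 2).
  rewrite /KP hornerD horner_sum mulrDr mulr1 mulr_sumr; congr (_ + _).
  apply eq_bigr => k Pk; rewrite hornerM hornerC (@GP_split P _ Pk) hornerM hornerXsubC.
  have hk : r - mu k != 0 by rewrite subr_eq0 eq_sym Hne.
  by field.
rewrite mulf_neq0 ?GP_eval_neq0 //.
have : 0 <= \sum_(k | P k) w k / (r - mu k) ^+ 2.
  by apply: sumr_ge0 => k _; rewrite divr_ge0 // sqr_ge0.
move=> h; apply/eqP => h2; lra.
Qed.


Definition Wv r := \sum_(k | mu k == r) w k.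

Lemma F_group r :
  ('X - r%:P) * FP predT =
  ('X - r%:P) ^+ #|[pred i | mu i == r]| *
    (('X - r%:P) * FP [pred k | mu k != r] - (Wv r)%:P * GP [pred k | mu k != r]).
Proof.
set P := [pred k | mu k != r].
set GA := \prod_(l | mu l == r) q l.
have eGA : GA = ('X - r%:P) ^+ #|[pred i | mu i == r]|.
  rewrite -prodr_const /GA; apply: eq_big => // l /eqP ->. done.
have eG : GP predT = GA * GP P.
  by rewrite /GP (bigID [pred l | mu l == r]) /=.
have eA : forall k, mu k == r -> ('X - r%:P) * GPk predT k = GA * GP P.
  move=> k /eqP Hk; rewrite /GPk (bigID [pred l | mu l == r]) /= mulrA.
  congr (_ * _); last first.
    by apply: eq_bigl => l /=; apply/andP/idP => [[]//|h]; split=> //; apply: contraNneq h => ->; rewrite Hk.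
  rewrite /GA [RHS](bigD1 k) ?Hk //=; congr (_ * _).
  by apply: eq_bigl => l /=; rewrite andbC.
have eN : forall k, mu k != r -> GPk predT k = GA * GPk P k.
  move=> k Hk; rewrite /GPk (bigID [pred l | mu l == r]) /=.
  congr (_ * _).
    apply: eq_bigl => l /=; apply/andP/idP => [[]//|h]; split=> //.
    by apply: contraTneq h => ->.
  by apply: eq_bigl => l /=; rewrite andbC.
rewrite /FP eG (bigID [pred l | mu l == r]) /= -eGA.
have -> : \sum_(i | mu i == r) (w i)%:P * GPk predT i =
          \sum_(i | mu i == r) (w i)%:P * GPk predT i by [].
rewrite mulrBr mulrDr.
have -> : ('X - r%:P) * \sum_(i | mu i == r) (w i)%:P * GPk predT i = (Wv r)%:P * (GA * GP P).
  rewrite mulr_sumr /Wv rmorph_sum mulr_suml; apply eq_bigr => k Hk.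
  by rewrite mulrCA eA.
have -> : \sum_(i | mu i != r) (w i)%:P * GPk predT i = GA * \sum_(i | P i) (w i)%:P * GPk P i.
  rewrite mulr_sumr; apply eq_bigr => k Hk; rewrite eN //; ring.
ring.
Qed.

End Core.

Section Mult.
Variable R : rcfType.

Lemma mult_uniq (r : R) i j (A B : {poly R}) :
  ('X - r%:P) ^+ i * A = ('X - r%:P) ^+ j * B -> A.[r] != 0 -> B.[r] != 0 -> i = j.
Proof.
wlog le_ij : i j A B / (i <= j)%N.
  move=> Hw E HA HB; case: (leqP i j) => h; first exact: (Hw i j A B h E HA HB).
  by apply/esym; apply: (Hw j i B A (ltnW h) (esym E) HB HA).
move=> E HA HB.
have E' : A = ('X - r%:P) ^+ (j - i) * B.
  apply: (mulfI (expf_neq0 i (negbT (polyXsubC_eq0 r)))).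
  by rewrite mulrA -exprD subnKC.
apply/eqP; rewrite eqn_leq le_ij /= -subn_eq0.
apply: contraTT HA => h; rewrite negbK E' hornerM horner_exp hornerXsubC subrr expr0n.
by rewrite (negbTE h) mul0r.
Qed.

Lemma prod_lam_split m (lam : 'I_m -> R) r :
  \prod_i ('X - (lam i)%:P) =
  ('X - r%:P) ^+ #|[pred i | lam i == r]| * \prod_(i | lam i != r) ('X - (lam i)%:P).
Proof.
rewrite (bigID [pred i | lam i == r]) /= -prodr_const; congr (_ * _).
by apply: eq_big => // l /eqP ->.
Qed.

End Mult.


Section CoreRel.
Variables (R : rcfType) (n m : nat) (mu w : 'I_n -> R) (c : R) (lam : 'I_m -> R).
Hypothesis w_ge0 : forall k, 0 <= w k.
Hypothesis HF : FP mu w c predT = \prod_i ('X - (lam i)%:P).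

Lemma core_rel r :
  (Wv mu w r != 0 -> #|[pred i | mu i == r]| = #|[pred i | lam i == r]|.+1 /\
     \prod_(i | lam i != r) (r - lam i) = - Wv mu w r * \prod_(l | mu l != r) (r - mu l)) /\
  (Wv mu w r = 0 -> #|[pred i | mu i == r]| = #|[pred i | lam i == r]| \/
                     #|[pred i | mu i == r]|.+1 = #|[pred i | lam i == r]|).
Proof.
set a := #|[pred i | mu i == r]|; set b := #|[pred i | lam i == r]|.
set P := [pred k | mu k != r].
set Q := \prod_(i | lam i != r) ('X - (lam i)%:P).
set W := Wv mu w r.
have Hne : forall k, P k -> mu k != r by [].
have E : ('X - r%:P) ^+ b.+1 * Q =
         ('X - r%:P) ^+ a * (('X - r%:P) * FP mu w c P - W%:P * GP mu P).
  by rewrite -F_group HF (prod_lam_split lam r) mulrA -exprS.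
have HQ : Q.[r] != 0.
  rewrite /Q horner_prod; apply/prodf_neq0 => i Hi.
  by rewrite hornerXsubC subr_eq0 eq_sym.
have HG := GP_eval_neq0 Hne.
have HK := KP_eval_neq0 w_ge0 Hne.
have HQe : Q.[r] = \prod_(i | lam i != r) (r - lam i).
  by rewrite /Q horner_prod; apply: eq_bigr => i _; rewrite hornerXsubC.
split.
  move=> HW.
  have HE : (('X - r%:P) * FP mu w c P - W%:P * GP mu P).[r] = - W * (GP mu P).[r].
    by rewrite hornerD hornerN !hornerM hornerXsubC subrr mul0r hornerC add0r mulNr.
  have Hab : b.+1 = a.
    apply: (mult_uniq E HQ); rewrite HE mulNr oppr_eq0 mulf_neq0 //.
  split; first by rewrite Hab.
  rewrite -HQe -GP_eval.
  move: E; rewrite Hab => /(mulfI (expf_neq0 _ (negbT (polyXsubC_eq0 r)))) ->.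
  exact: HE.
move=> HW; rewrite (FP_decomp w c Hne) HW in E.
rewrite polyC0 mul0r subr0 in E.
case: (eqVneq (sP mu w c P r) 0) => Hs.
  rewrite Hs polyC0 mul0r addr0 in E. move: E. rewrite !mulrA -!exprSr => E.
  right; have := mult_uniq E HQ HK; lia.
left; rewrite mulrA -exprSr in E.
have := mult_uniq E HQ; rewrite hornerD hornerM hornerXsubC subrr mul0r add0r hornerM hornerC.
move=> /(_ (mulf_neq0 Hs HG)); lia.
Qed.

End CoreRel.

Section Group.
Variable R : rcfType.

Lemma big_group (T : Type) (idx : T) (op : Monoid.com_law idx) k (s : 'I_k -> R)
   (U : seq R) (F : 'I_k -> T) :
  uniq U -> (forall i, s i \in U) ->
  \big[op/idx]_i F i = \big[op/idx]_(v <- U) \big[op/idx]_(i | s i == v) F i.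
Proof.
move=> uU sU; rewrite (exchange_big_dep xpredT) //=; apply: eq_bigr => i _.
rewrite (eq_bigl (pred1 (s i))); last by move=> v; rewrite /= eq_sym.
by rewrite -big_filter filter_pred1_uniq // big_seq1.
Qed.

Lemma prod_group k (s : 'I_k -> R) (U : seq R) (P : pred R) (g : R -> R) :
  uniq U -> (forall i, s i \in U) ->
  \prod_(i | P (s i)) g (s i) = \prod_(v <- U | P v) g v ^+ nocc s v.
Proof.
move=> uU sU; rewrite big_mkcond (big_group _ _ uU sU) [RHS]big_mkcond.
apply: eq_bigr => v _.
rewrite (eq_bigr (fun _ => if P v then g v else 1)); last by move=> i /eqP ->.
case: (P v); last by rewrite big1.
by rewrite -prodr_const; apply: eq_bigl => i; rewrite inE.
Qed.

Lemma mem_vals k (s : 'I_k -> R) i : s i \in vals s.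
Proof. by rewrite /vals mem_undup; apply: map_f; rewrite mem_enum. Qed.

Lemma vals_nocc k (s : 'I_k -> R) v : (0 < nocc s v)%N -> v \in vals s.
Proof. by case/card_gt0P => i; rewrite inE => /eqP <-; apply: mem_vals. Qed.

Lemma uniq_vals k (s : 'I_k -> R) : uniq (vals s).
Proof. exact: undup_uniq. Qed.

Lemma filter_prod (s U : seq R) (P : pred R) (r : R) (g : R -> R) :
  uniq s -> uniq U -> {subset s <= U} -> (forall v, P v -> v \in s) ->
  (forall v, P v -> v != r) ->
  \prod_(v <- s | P v) g v = \prod_(v <- U | v != r) (if P v then g v else 1).
Proof.
move=> us uU sU Ps Pr; rewrite -big_mkcondr -big_filter -[RHS]big_filter.
apply: perm_big; apply: uniq_perm; rewrite ?filter_uniq // => v.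
rewrite !mem_filter; case Pv: (P v) => /=; last by rewrite andbF.
by rewrite Pr // Ps // sU // Ps.
Qed.

End Group.

Section Values.
Variables (R : rcfType) (n : nat) (mu w : 'I_n -> R) (c : R) (lam : 'I_n.+1 -> R).
Hypothesis w_ge0 : forall k, 0 <= w k.
Hypothesis HF : FP mu w c predT = \prod_i ('X - (lam i)%:P).

Lemma value_notM r : ~~ Mshape lam mu r -> Wv mu w r = 0.
Proof.
move=> HM; apply/eqP; apply: contraNT HM => HW.
have [H1 _] := core_rel w_ge0 HF r; have [H _] := H1 HW.
by rewrite /Mshape /nocc H.
Qed.

Lemma nocc_near r : (nocc lam r <= (nocc mu r).+1)%N /\ (nocc mu r <= (nocc lam r).+1)%N.
Proof.
have [H1 H2] := core_rel w_ge0 HF r.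
case: (eqVneq (Wv mu w r) 0) => HW.
  case: (H2 HW) => e.
    have e' : nocc mu r = nocc lam r := e; lia.
  have e' : (nocc mu r).+1 = nocc lam r := e; lia.
have [e _] := H1 HW; have e' : nocc mu r = (nocc lam r).+1 := e; lia.
Qed.

Lemma value_M r : Mshape lam mu r -> Wv mu w r = rsq lam mu r.
Proof.
move=> HM.
have [H1 H2] := core_rel w_ge0 HF r.
have HW : Wv mu w r != 0.
  apply/eqP => HW; move: HM; rewrite /Mshape => /eqP HM.
  case: (H2 HW) => e.
    have e' : nocc mu r = nocc lam r := e; lia.
  have e' : (nocc mu r).+1 = nocc lam r := e; lia.
have [_ E] := H1 HW.
set U := undup (vals lam ++ vals mu).
have uU : uniq U := undup_uniq _.
have lU : forall i, lam i \in U by move=> i; rewrite mem_undup mem_cat mem_vals.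
have mU : forall i, mu i \in U by move=> i; rewrite mem_undup mem_cat mem_vals orbT.
have sLU : {subset vals lam <= U} by move=> v Hv; rewrite mem_undup mem_cat Hv.
have sMU : {subset vals mu <= U} by move=> v Hv; rewrite mem_undup mem_cat Hv orbT.
have HGm : \prod_(l | mu l != r) (r - mu l) != 0.
  by apply/prodf_neq0 => l Hl; rewrite subr_eq0 eq_sym.
have -> : Wv mu w r = - (\prod_(i | lam i != r) (r - lam i)) / \prod_(l | mu l != r) (r - mu l).
  by rewrite E; field.
rewrite /rsq.
rewrite (prod_group (fun v => v != r) (fun v => r - v) uU lU).
rewrite (prod_group (fun v => v != r) (fun v => r - v) uU mU).
rewrite (@filter_prod _ (vals lam) U (Wshape lam mu) r (fun l => r - l) (uniq_vals _) uU sLU); first last.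
- move=> v Hv; apply/eqP => e; move: Hv HM; rewrite e /Wshape /Mshape => /eqP -> /eqP; lia.
- by move=> v Hv; apply: vals_nocc; move: Hv; rewrite /Wshape => /eqP ->.
rewrite (@filter_prod _ (vals mu) U (fun s => Mshape lam mu s && (s != r)) r (fun l => (r - l)^-1) (uniq_vals _) uU sMU); first last.
- by move=> v /andP[].
- by move=> v /andP[Hv _]; apply: vals_nocc; move: Hv; rewrite /Mshape => /eqP ->.
have HB : \prod_(v <- U | v != r) (r - v) ^+ nocc mu v != 0.
  by rewrite -(prod_group (fun v => v != r) (fun v => r - v) uU mU).
rewrite !mulNr; congr (- _).
apply: (mulIf HB); rewrite mulfVK // -!big_split /=.
apply: eq_bigr => v Hv.
have Hrv : r - v != 0 by rewrite subr_eq0 eq_sym.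
have [N1 N2] := nocc_near v.
rewrite Hv andbT /Wshape /Mshape.
case: (ltngtP (nocc lam v) (nocc mu v)) => h.
- have e : nocc mu v = (nocc lam v).+1 by lia.
  rewrite e eqxx; have -> : (nocc lam v == (nocc lam v).+2) = false by lia.
  by rewrite mul1r exprS mulrA mulVf // mul1r.
- have e : nocc lam v = (nocc mu v).+1 by lia.
  rewrite e eqxx; have -> : (nocc mu v == (nocc mu v).+2) = false by lia.
  by rewrite mulr1 exprS.
- rewrite h; have -> : (nocc mu v == (nocc mu v).+1) = false by lia.
  by rewrite !mul1r.
Qed.

End Values.


Lemma det_arrow (F : idomainType) n (a : F) (b : 'rV[F]_n) (cc : 'cV[F]_n) (d : 'I_n -> F) :
  \prod_k d k != 0 ->
  \det (block_mx (a%:M : 'M_1) b cc (diag_mx (\row_j d j))) =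
    a * \prod_k d k - \sum_k b 0 k * cc k 0 * \prod_(l | l != k) d l.
Proof.
move=> Hpd.
set D := diag_mx (\row_j d j).
set E := diag_mx (\row_k \prod_(l | l != k) d l).
set pd := \prod_k d k.
have ED : E *m D = pd%:M.
  apply/matrixP => i j; rewrite mul_diag_mx !mxE.
  case: (eqVneq i j) => [->|h]; last by rewrite mulr0n mulr0.
  by rewrite /= !mulr1n /pd [RHS](bigD1 j) //= mulrC.
set L := block_mx (pd%:M : 'M_1) (- (b *m E)) 0 1%:M.
have HL : \det L = pd by rewrite /L det_ublock det1 mulr1 det_scalar1.
have HLA : L *m block_mx (a%:M : 'M_1) b cc D =
   block_mx (pd%:M *m a%:M + (- (b *m E)) *m cc) 0 cc D.
  rewrite /L mulmx_block !mul0mx !mul1mx !add0r; congr block_mx.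
  by rewrite mulNmx -mulmxA ED mul_mx_scalar mul_scalar_mx subrr.
have := det_mulmx L (block_mx (a%:M : 'M_1) b cc D).
rewrite HLA det_lblock HL /D det_diag.
have -> : \prod_i (\row_j d j) 0 i = pd by apply: eq_bigr => i _; rewrite mxE.
move=> H; rewrite [pd * _]mulrC in H; rewrite -(mulIf Hpd H).
rewrite det_mx11 !mxE big_ord1 !mxE eqxx mulr1n.
rewrite /= mulr1n mulrC -sumrN; congr (_ + _); apply: eq_bigr => k _.
rewrite /E mul_mx_diag !mxE mulNr; congr (- _); ring.
Qed.

Section Cplx.
Variable R : rcfType.
Local Open Scope complex_scope.
Lemma conj_mulC (z : R[i]) : z^* * z = ((complex.Re z)^+2 + (complex.Im z)^+2)%:C.
Proof. case: z => a b /=. rewrite /GRing.mul /=. apply/eqP; rewrite eq_complex /=. apply/andP; split; apply/eqP; ring. Qed.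
Lemma conj_real_eq (z : R[i]) : z^* = z -> z = (complex.Re z)%:C.
Proof. case: z => a b /= [] => h. apply/eqP; rewrite eq_complex /= eqxx /=. apply/eqP; lra. Qed.
Lemma sq_eq0C (z : R[i]) : (complex.Re z)^+2 + (complex.Im z)^+2 = 0 -> z = 0.
Proof. case: z => a b /= h. have ha : a = 0 by nra. have hb : b = 0 by nra. by rewrite ha hb. Qed.
End Cplx.

Unset Implicit Arguments.
Local Open Scope complex_scope.

Theorem lemma4p4 (R : rcfType) (n : nat) (lam : 'I_n.+1 -> R) (mu : 'I_n -> R)
    (c : R[i]) (z : 'cV[R[i]]_n) (X : 'M[R[i]]_n) (x : 'cV[R[i]]_n) (m : R) :
  (0 < n)%N ->
  nonincr lam -> nonincr mu ->
  let M : 'M[R[i]]_n := diag_mx (\row_j (mu j)%:C) in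
  let p : 'M[R[i]]_(1 + n) := block_mx c%:M (adjmx z) z M in
  adjmx p = p ->
  char_poly p = \prod_(i < n.+1) ('X - ((lam i)%:C)%:P) ->
  adjmx X = - X ->
  x *m adjmx z + z *m adjmx x + (X *m M - M *m X) = 0 ->
  m \in vals mu ->
  ~~ Mshape lam mu m ->
  forall j : 'I_n, mu j = m ->
    (X *m z) j 0 =
      (\sum_(t <- vals mu | Mshape lam mu t) (rsq lam mu t / (m - t))%:C) * x j 0.
Proof.
move=> _ _ _ M p Hadj Hchar _ Heq _ HnotM j Hj.
set cr := complex.Re c.
have Hc : c = cr%:C.
  apply: conj_real_eq.
  have := congr1 (fun A : 'M[R[i]]_(1 + n) => A (lshift n (ord0 : 'I_1)) (lshift n (ord0 : 'I_1))) Hadj.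
  by rewrite /adjmx /p map_block_mx tr_block_mx !block_mxEul !mxE /= !mulr1n.
pose w k := (complex.Re (z k 0))^+2 + (complex.Im (z k 0))^+2.
have w_ge0 : forall k, 0 <= w k by move=> k; rewrite /w addr_ge0 // sqr_ge0.
have Hw : forall k, (z k 0)^* * z k 0 = (w k)%:C by move=> k; rewrite conj_mulC.
have HF : FP mu w cr predT = \prod_i ('X - (lam i)%:P).
  apply: (map_poly_inj (real_complex R)).
  rewrite rmorph_prod /=.
  under eq_bigr do rewrite map_polyXsubC.
  rewrite -Hchar /char_poly.
  have -> : char_poly_mx p = block_mx (('X - c%:P)%:M : 'M_1) (- map_mx polyC (adjmx z))
        (- map_mx polyC z) (diag_mx (\row_j ('X - ((mu j)%:C)%:P))).
    rewrite /char_poly_mx /p map_block_mx (scalar_mx_block 1 n) opp_block_mx add_block_mx.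
    congr block_mx; apply/matrixP => a b; rewrite !mxE ?add0r ?sub0r //.
    by rewrite (ord1 a) (ord1 b) eqxx /= !mulr1n.
    by case: (a == b); rewrite /= ?mulr1n ?mulr0n ?polyC0 ?subr0.
  rewrite det_arrow; last by apply/prodf_neq0 => k _; rewrite polyXsubC_eq0.
  rewrite /FP /GP /GPk rmorphB rmorphM rmorph_prod rmorph_sum /= map_polyXsubC Hc.
  congr (_ * _ - _).
    by apply: eq_bigr => k _; rewrite map_polyXsubC.
  apply: eq_bigr => k _; rewrite rmorphM rmorph_prod /= map_polyC /=.
  rewrite !mxE mulrNN -polyCM Hw; congr (_ * _).
  by apply: eq_bigr => l _; rewrite map_polyXsubC.
have HW0 := value_notM w_ge0 HF HnotM.
have wk0 : forall k, mu k = m -> w k = 0.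
  move=> k hk; apply: (psumr_eq0P _ HW0) => //; last by rewrite hk.
have zk0 : forall k, mu k = m -> z k 0 = 0 by move=> k hk; apply: sq_eq0C; exact: wk0.
have Hentry : forall k, x j 0 * (z k 0)^* + z j 0 * (x k 0)^* + (X j k * (mu k)%:C - (mu j)%:C * X j k) = 0.
  move=> k; have := congr1 (fun A : 'M[R[i]]_n => A j k) Heq.
  by rewrite /M mul_mx_diag mul_diag_mx !mxE !big_ord1 !mxE.
rewrite mxE.
rewrite (eq_bigr (fun k => x j 0 * (w k / (m - mu k))%:C)); last first.
  move=> k _; case: (eqVneq (mu k) m) => hk.
    by rewrite zk0 // wk0 // mul0r mulr0 rmorph0 mulr0.
  have hne : (mu k)%:C - m%:C != 0 :> R[i].
    by rewrite -rmorphB fmorph_eq0 subr_eq0.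
  have hne2 : m%:C - (mu k)%:C != 0 :> R[i].
    by rewrite -rmorphB fmorph_eq0 subr_eq0 eq_sym.
  have e := Hentry k; rewrite (zk0 j Hj) mul0r addr0 Hj in e.
  move/eqP: e; rewrite addrC addr_eq0 => /eqP e.
  have e2 : X j k * ((mu k)%:C - m%:C) = -(x j 0 * (z k 0)^*).
    by rewrite mulrBr (mulrC (X j k) m%:C) e.
  have eX : X j k = -(x j 0 * (z k 0)^*) / ((mu k)%:C - m%:C).
    by rewrite -e2 mulfK.
  rewrite fmorph_div rmorphB /= -Hw eX.
  field.
  by rewrite hne hne2.
rewrite -mulr_sumr mulrC; congr (_ * _).
rewrite -!rmorph_sum; congr (_%:C).
rewrite (big_group _ _ (uniq_vals mu) (mem_vals mu)) [RHS]big_mkcond; apply: eq_bigr => v _.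
rewrite (eq_bigr (fun k => w k / (m - v))); last by move=> k /eqP ->.
rewrite -mulr_suml -/(Wv mu w v).
case: (boolP (Mshape lam mu v)) => hv.
  by rewrite (value_M w_ge0 HF hv).
by rewrite (value_notM w_ge0 HF hv) mul0r.
Qed.
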